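(* Let $n\ge 2$ and $k>0$. Then $\mathbf{H}$ is $(k,\dots,k)$-increasing: $\mathbf{H}(\mathbf{x})\le\mathbf{H}(x_1+tk,\dots,x_n+tk)$ for all $\mathbf{x}\in[0,1]^n$ and $t>0$ with $(x_1+tk,\dots,x_n+tk)\in[0,1]^n$.
   Context: For $\mathbf{x}\in[0,1]^n$ let $x_{(1)}\ge\dots\ge x_{(n)}$ be its entries in decreasing order, and define the median $Med(\mathbf{x})=\frac12(x_{(k)}+x_{(k+1)})$ if $n=2k$ and $Med(\mathbf{x})=x_{(k+1)}$ if $n=2k+1$ (here $k$ is just the index for the median). Define $f_i(\mathbf{x})=\frac1n$ if $x_1=\dots=x_n$, and otherwise $f_i(\mathbf{x})=\frac{1}{n-1}\Big(1-\frac{|x_i-Med(\mathbf{x})|}{\sum_{j=1}^n|x_j-Med(\mathbf{x})|}\Big)$. Then $\mathbf{H}(\mathbf{x})=\sum_{i=1}^n f_i(\mathbf{x})\,x_i$. *)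

(* Defs.v *)
From HB Require Import structures.
From mathcomp Require Import all_boot all_order all_algebra.
Set Implicit Arguments. Unset Strict Implicit. Unset Printing Implicit Defensive.
Import Order.TTheory GRing.Theory Num.Theory.
Local Open Scope ring_scope.

Section Defs.
Variable R : realFieldType.

(* entries of x sorted in decreasing order: x_(1) >= ... >= x_(n),
   stored 0-based: (sorted_desc x)`_j = x_(j+1) *)
Definition sorted_desc (n : nat) (x : 'I_n -> R) : seq R :=
  sort (fun a b : R => b <= a) [seq x i | i <- enum 'I_n].

Definition Med (n : nat) (x : 'I_n -> R) : R :=
  let s := sorted_desc x in
  let k := n./2 in
  if ~~ odd n then (s`_(k.-1) + s`_k) / 2 else s`_k.

Definition all_equal (n : nat) (x : 'I_n -> R) : bool :=
  [forall i, forall j, x i == x j].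

Definition fw (n : nat) (x : 'I_n -> R) (i : 'I_n) : R :=
  if all_equal x then 1 / n%:R
  else (1 / (n%:R - 1)) *
       (1 - `|x i - Med x| / \sum_(j < n) `|x j - Med x|).

Definition H (n : nat) (x : 'I_n -> R) : R := \sum_(i < n) fw x i * x i.

Definition in_unit_cube (n : nat) (x : 'I_n -> R) : Prop :=
  forall i, 0 <= x i <= 1.

End Defs.

(* Main.v *)
Require Import Defs.
From mathcomp Require Import all_boot all_order all_algebra.
From mathcomp Require Import zify ring lra.
Import Order.TTheory GRing.Theory Num.Theory.
Local Open Scope ring_scope.

Lemma sorted_shift (R : realFieldType) n (x : 'I_n -> R) c :
  sorted_desc (fun i => x i + c) = map (fun a => a + c) (sorted_desc x).
Proof.
rewrite /sorted_desc (map_sort (leT' := fun a b : R => b <= a) (leT := fun a b : R => b <= a)); last first.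
  by move=> a b /=; rewrite lerD2r.
by rewrite -map_comp.
Qed.

Lemma size_sorted (R : realFieldType) n (x : 'I_n -> R) : size (sorted_desc x) = n.
Proof. by rewrite /sorted_desc size_sort size_map size_enum_ord. Qed.

Lemma Med_shift (R : realFieldType) n (x : 'I_n -> R) c : (2 <= n)%N ->
  Med (fun i => x i + c) = Med x + c.
Proof.
move=> hn; rewrite /Med sorted_shift.
have h1 : (n./2 < size (sorted_desc x))%N by rewrite size_sorted; rewrite ltn_half_double; lia.
have h2 : (n./2.-1 < size (sorted_desc x))%N by apply: leq_ltn_trans h1; exact: leq_pred.
case: ifP => _.
  by rewrite !(nth_map 0) //; field.
by rewrite (nth_map 0).
Qed.

Lemma all_equal_shift (R : realFieldType) n (x : 'I_n -> R) c :
  all_equal (fun i => x i + c) = all_equal x.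
Proof.
rewrite /all_equal; apply: eq_forallb => i; apply: eq_forallb => j.
by apply/eqP/eqP => [/addIr|->].
Qed.

Lemma fw_shift (R : realFieldType) n (x : 'I_n -> R) c i : (2 <= n)%N ->
  fw (fun i => x i + c) i = fw x i.
Proof.
move=> hn; rewrite /fw all_equal_shift Med_shift //.
have E : forall j, x j + c - (Med x + c) = x j - Med x.
  by move=> j; rewrite opprD addrACA subrr addr0.
by rewrite E; under eq_bigr => j _ do rewrite E.
Qed.

Lemma fw_ge0 (R : realFieldType) n (x : 'I_n -> R) i : (2 <= n)%N -> 0 <= fw x i.
Proof.
move=> hn; rewrite /fw; case: ifP => _.
  by rewrite mul1r invr_ge0 ler0n.
apply: mulr_ge0.
  rewrite mul1r invr_ge0 subr_ge0 (ler_nat R 1 n); lia.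
rewrite subr_ge0.
set S := \sum_(j < n) _.
have hS : `|x i - Med x| <= S.
  rewrite /S (bigD1 i) //= lerDl; apply: sumr_ge0 => j _; exact: normr_ge0.
have [S0|S0] := eqVneq S 0.
  by rewrite S0 invr0 mulr0.
have Sp : 0 < S by rewrite lt_def S0 /=; apply: le_trans hS.
by rewrite ler_pdivrMr // mul1r.
Qed.

Theorem proposition18 (R : realFieldType) (n : nat) (k : R)
  (hn : (2 <= n)%N) (hk : 0 < k) (x : 'I_n -> R) (t : R) (ht : 0 < t) :
  in_unit_cube x ->
  in_unit_cube (fun i => x i + t * k) ->
  H x <= H (fun i => x i + t * k).
Proof.
move=> _ _; rewrite /H.
under [X in _ <= X]eq_bigr => i _ do rewrite fw_shift // mulrDr.
rewrite big_split /= lerDl; apply: sumr_ge0 => i _.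
apply: mulr_ge0; first exact: fw_ge0.
by apply: mulr_ge0; apply: ltW.
Qed.
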